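(* Let $\phi_{\mathrm{NH}}(y,t)=t^{-1/2}\exp(y^2/(2t))$ and $\log\Phi(\boldsymbol x,t)=\log\sum_{i=1}^N\phi_{\mathrm{NH}}(x_i,t)$ on $\mathbb{R}^N\times(0,\infty)$. Fix $(\boldsymbol x,t)$ and $(\Delta\boldsymbol x,\Delta t)$ with $t>0$ and $t+\Delta t>0$, and let $(\boldsymbol x(s),t(s))=(\boldsymbol x,t)+s(\Delta\boldsymbol x,\Delta t)$, $s\in[0,1]$, with $$t_\star:=\min_{s\in[0,1]}t(s),\qquad K_{\rm seg}:=\sup_{s\in[0,1]}\max_{1\le i\le N}\frac{x_i(s)^2}{t(s)}.$$ Then $\log\Phi$ satisfies $(1,2)$-generalized self-concordance on the segment $\mathcal C=\{(\boldsymbol x(s),t(s)):s\in[0,1]\}$ with respect to the norm $$\|(\bar{\boldsymbol x},\bar t)\|_*=A_x\|\bar{\boldsymbol x}\|_\infty+A_t|\bar t|,\qquad A_x=\frac{8\sqrt{K_{\rm seg}\vee1}}{\sqrt{t_\star}},\quad A_t=\frac{16(K_{\rm seg}\vee1)}{t_\star}.$$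
   Context: A $C^3$ function $f$ on an open set $\mathrm{dom}(f)\subseteq\mathbb{R}^p$ satisfies $(M,2)$-generalized self-concordance in a norm $\|\cdot\|_*$ on $\mathcal C\subseteq\mathrm{dom}(f)$ if for all $\boldsymbol x\in\mathcal C$ and $\boldsymbol u,\boldsymbol v\in\mathbb{R}^p$: $|\nabla^3f(\boldsymbol x)[\boldsymbol u,\boldsymbol u,\boldsymbol v]|\le M\|\boldsymbol v\|_*\,\boldsymbol u^{\mathsf T}\nabla^2f(\boldsymbol x)\boldsymbol u$. $a\vee b=\max\{a,b\}$. *)

(* Defs.v *)
(* Vectors in R^N are functions nat -> R;
   only the coordinates 0..N-1 are used. *)
From Stdlib Require Import Reals List.
From Coquelicot Require Import Coquelicot.
Open Scope R_scope.

Definition phiNH (y t : R) : R := / sqrt t * exp (y ^ 2 / (2 * t)).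

Definition sumN (N : nat) (g : nat -> R) : R :=
  fold_right Rplus 0 (map g (seq 0 N)).

(* max_{1<=i<=N} g(i) for nonnegative g (used for the sup-norm and K_seg) *)
Definition maxN (N : nat) (g : nat -> R) : R :=
  fold_right Rmax 0 (map g (seq 0 N)).

Definition logPhi (N : nat) (x : nat -> R) (t : R) : R :=
  ln (sumN N (fun i => phiNH (x i) t)).

Definition plane (f : (nat -> R) -> R -> R) (x : nat -> R) (t : R)
  (ux : nat -> R) (ut : R) (vx : nat -> R) (vt : R) (a b : R) : R :=
  f (fun i => x i + a * ux i + b * vx i) (t + a * ut + b * vt).

(* u^T (nabla^2 f)(x,t) u  as the second directional derivative *)
Definition hess_form (f : (nat -> R) -> R -> R) (x : nat -> R) (t : R)
  (ux : nat -> R) (ut : R) : R :=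
  Derive (fun a => Derive (fun a' => plane f x t ux ut ux ut a' 0) a) 0.

(* (nabla^3 f)(x,t)[u,u,v] as the mixed directional derivative d_b d_a^2 *)
Definition third_form (f : (nat -> R) -> R -> R) (x : nat -> R) (t : R)
  (ux : nat -> R) (ut : R) (vx : nat -> R) (vt : R) : R :=
  Derive (fun b =>
    Derive (fun a => Derive (fun a' => plane f x t ux ut vx vt a' b) a) 0) 0.

Definition seg_x (x dx : nat -> R) (s : R) : nat -> R := fun i => x i + s * dx i.
Definition seg_t (t dt s : R) : R := t + s * dt.

Definition t_star (t dt : R) : R :=
  real (Glb_Rbar (fun r => exists s, 0 <= s <= 1 /\ r = seg_t t dt s)).

Definition K_seg (N : nat) (x dx : nat -> R) (t dt : R) : R :=
  real (Lub_Rbar (fun r => exists s, 0 <= s <= 1 /\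
          r = maxN N (fun i => (seg_x x dx s i) ^ 2 / seg_t t dt s))).

Definition A_x (N : nat) (x dx : nat -> R) (t dt : R) : R :=
  8 * sqrt (Rmax (K_seg N x dx t dt) 1) / sqrt (t_star t dt).
Definition A_t (N : nat) (x dx : nat -> R) (t dt : R) : R :=
  16 * Rmax (K_seg N x dx t dt) 1 / t_star t dt.

Definition star_norm (N : nat) (x dx : nat -> R) (t dt : R)
  (vx : nat -> R) (vt : R) : R :=
  A_x N x dx t dt * maxN N (fun i => Rabs (vx i)) + A_t N x dx t dt * Rabs vt.

Definition gen_self_concordant (N : nat) (M : R) (f : (nat -> R) -> R -> R)
  (C : (nat -> R) -> R -> Prop) (nrm : (nat -> R) -> R -> R) : Prop :=
  forall x t, C x t ->
  forall (ux : nat -> R) (ut : R) (vx : nat -> R) (vt : R),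
    Rabs (third_form f x t ux ut vx vt) <= M * nrm vx vt * hess_form f x t ux ut.

(* Main.v *)
Require Import Defs.
From Stdlib Require Import Reals List.
From Coquelicot Require Import Coquelicot.
Open Scope R_scope.
From Stdlib Require Import Lra Psatz.


Lemma d_plus (f g : R -> R) (x df dg : R) : is_derive f x df -> is_derive g x dg ->
  is_derive (fun t => f t + g t) x (df + dg).
Proof. intros; apply (is_derive_plus f g); auto. Qed.
Lemma d_minus (f g : R -> R) (x df dg : R) : is_derive f x df -> is_derive g x dg ->
  is_derive (fun t => f t - g t) x (df - dg).
Proof. intros; apply (is_derive_minus f g); auto. Qed.
Lemma d_mult (f g : R -> R) (x df dg : R) : is_derive f x df -> is_derive g x dg ->
  is_derive (fun t => f t * g t) x (df * g x + f x * dg).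
Proof. intros; apply (is_derive_mult f g); auto. intros; apply Rmult_comm. Qed.
Lemma d_eq (f : R -> R) (x l l' : R) : is_derive f x l -> l = l' -> is_derive f x l'.
Proof. intros H ->; exact H. Qed.
Lemma d_ln (f : R -> R) (x df : R) : is_derive f x df -> 0 < f x ->
  is_derive (fun t => ln (f t)) x (df / f x).
Proof.
  intros H Hp. eapply d_eq. apply (is_derive_comp ln f). 2: exact H.
  auto_derive. lra. reflexivity. unfold scal; simpl; unfold mult; simpl. field. lra.
Qed.
Lemma d_sq (f : R -> R) (x df : R) : is_derive f x df -> is_derive (fun t => f t ^ 2) x (2 * f x * df).
Proof. intros H. eapply d_eq. apply is_derive_pow. exact H. simpl. ring. Qed.

Definition sm (l : list nat) (f : nat -> R) : R := fold_right Rplus 0 (map f l).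

Lemma d_sm l (f : nat -> R -> R) (f' : nat -> R) x :
  (forall i, is_derive (f i) x (f' i)) ->
  is_derive (fun s => sm l (fun i => f i s)) x (sm l f').
Proof.
  intros H. induction l as [|i l IH]; simpl.
  - unfold sm; simpl. apply (is_derive_const 0).
  - unfold sm in *; simpl. apply d_plus; auto.
Qed.

Definition Hx (Y T p q : R) := - q / (2 * T) + Y * p / T - Y ^ 2 * q / (2 * T ^ 2).
Definition Pg (Y T p1 q1 p2 q2 : R) :=
  q1 * q2 / (2 * T ^ 2) + (p1 - Y / T * q1) * (p2 - Y / T * q2) / T.
Definition Rg (Y T p1 q1 p2 q2 : R) :=
  - q1 ^ 2 * q2 / T ^ 3 - 2 * (p1 - Y / T * q1) * q1 * (p2 - Y / T * q2) / T ^ 2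
  - (p1 - Y / T * q1) ^ 2 * q2 / T ^ 2.

Lemma d_phi c p d q s : 0 < d + s * q ->
  is_derive (fun s => phiNH (c + s * p) (d + s * q)) s
    (phiNH (c + s * p) (d + s * q) * Hx (c + s * p) (d + s * q) p q).
Proof.
  intros HT. unfold phiNH, Hx. auto_derive.
  - repeat split; try lra. apply Rgt_not_eq, sqrt_lt_R0; lra.
  - set (T := d + s * q) in *. set (E := exp _).
    set (S := sqrt T). assert (HS : S * S = T) by (apply sqrt_sqrt; lra).
    assert (HS0 : 0 < S) by (apply sqrt_lt_R0; lra).
    clearbody E S. rewrite <- HS. field. lra.
Qed.

Lemma d_Hx c p d q p' q' s : d + s * q <> 0 ->
  is_derive (fun s => Hx (c + s * p) (d + s * q) p' q') s
    (Pg (c + s * p) (d + s * q) p' q' p q).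
Proof.
  intros HT. unfold Hx, Pg. auto_derive.
  - repeat split; repeat apply Rmult_integral_contrapositive_currified; auto; lra.
  - field. auto.
Qed.

Lemma d_Pg c p d q p' q' s : d + s * q <> 0 ->
  is_derive (fun s => Pg (c + s * p) (d + s * q) p' q' p' q') s
    (Rg (c + s * p) (d + s * q) p' q' p q).
Proof.
  intros HT. unfold Rg, Pg. auto_derive.
  - repeat split; repeat apply Rmult_integral_contrapositive_currified; auto; lra.
  - field. auto.
Qed.

Lemma core (a1 b1 zeta nu mu d delta Vn k : R) : 1 <= k -> Rabs mu <= Vn -> Rabs zeta <= k ->
  Rabs delta <= 2 * k * Vn + k ^ 2 * Rabs nu ->
  Rabs ((- b1 ^ 2 * nu - 2 * a1 * b1 * (mu - zeta * nu) - a1 ^ 2 * nu)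
        + 2 * d * (b1 * nu / 2 + a1 * (mu - zeta * nu))
        + delta * ((b1 ^ 2 / 2 + a1 ^ 2) + d ^ 2))
  <= (5 * k * Vn + 8 * k ^ 2 * Rabs nu) * ((b1 ^ 2 / 2 + a1 ^ 2) + d ^ 2).
Proof.
  intros Hk Hmu Hz Hd.
  set (M := mu - zeta * nu).
  assert (HM : Rabs M <= Vn + k * Rabs nu).
  { unfold M. eapply Rle_trans. apply Rabs_triang. rewrite Rabs_Ropp, Rabs_mult.
    assert (0 <= Rabs nu) by apply Rabs_pos. nra. }
  set (A := Rabs a1) in *. set (B := Rabs b1) in *. set (D := Rabs d) in *. set (E := Rabs nu) in *.
  set (Mm := Rabs M) in *.
  assert (HA : a1 ^ 2 = A ^ 2) by (unfold A; rewrite pow2_abs; reflexivity).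
  assert (HB : b1 ^ 2 = B ^ 2) by (unfold B; rewrite pow2_abs; reflexivity).
  assert (HD : d ^ 2 = D ^ 2) by (unfold D; rewrite pow2_abs; reflexivity).
  assert (A0 : 0 <= A) by apply Rabs_pos. assert (B0 : 0 <= B) by apply Rabs_pos.
  assert (D0 : 0 <= D) by apply Rabs_pos. assert (E0 : 0 <= E) by apply Rabs_pos.
  assert (M0 : 0 <= Mm) by apply Rabs_pos.
  assert (V0 : 0 <= Vn) by (eapply Rle_trans; [apply Rabs_pos|exact Hmu]).
  set (W := (b1 ^ 2 / 2 + a1 ^ 2) + d ^ 2).
  assert (HW : W = B ^ 2 / 2 + A ^ 2 + D ^ 2) by (unfold W; rewrite HA, HB, HD; ring).
  assert (HR : Rabs (- b1 ^ 2 * nu - 2 * a1 * b1 * M - a1 ^ 2 * nu)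
               <= B ^ 2 * E + 2 * A * B * Mm + A ^ 2 * E).
  { assert (T3: forall a b c, Rabs (a+b+c) <= Rabs a + Rabs b + Rabs c) by
      (intros; eapply Rle_trans; [apply Rabs_triang|]; pose proof (Rabs_triang a b); lra).
    unfold Rminus. eapply Rle_trans; [apply T3|].
    rewrite !Rabs_Ropp, !Rabs_mult, <- !RPow_abs.
    replace (Rabs 2) with 2 by (rewrite Rabs_pos_eq; lra). rewrite ?Rabs_Ropp, <- ?RPow_abs. fold A B E Mm. lra. }
  assert (HP : Rabs (2 * d * (b1 * nu / 2 + a1 * M)) <= D * B * E + 2 * D * A * Mm).
  { rewrite Rabs_mult. eapply Rle_trans.
    apply Rmult_le_compat_l. apply Rabs_pos. apply Rabs_triang.
    rewrite !Rabs_mult. unfold Rdiv. rewrite Rabs_mult.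
    replace (Rabs 2) with 2 by (rewrite Rabs_pos_eq; lra).
    rewrite Rabs_inv. replace (Rabs 2) with 2 by (rewrite Rabs_pos_eq; lra).
    fold A B D E Mm. rewrite Rabs_mult. fold B E. apply Req_le. field. }
  assert (HDl : Rabs (delta * W) <= (2 * k * Vn + k ^ 2 * E) * W).
  { rewrite Rabs_mult. rewrite (Rabs_pos_eq W). apply Rmult_le_compat_r. rewrite HW. nra.
    exact Hd. rewrite HW; nra. }
  eapply Rle_trans. apply Rabs_triang. eapply Rle_trans. apply Rplus_le_compat_r. apply Rabs_triang.
  fold W. 
  assert (h1 : 2 * A * B * Mm <= (A ^ 2 + B ^ 2) * (Vn + k * E)).
  { assert (0 <= ((A - B) ^ 2) * Mm) by (apply Rmult_le_pos; [apply pow2_ge_0 || nra | lra]).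
    assert (0 <= (A ^ 2 + B ^ 2) * (Vn + k * E - Mm)) by (apply Rmult_le_pos; [nra|]; lra). lra. }
  assert (h2 : D * B * E <= E * (D ^ 2 + B ^ 2) / 2).
  { assert (0 <= ((D - B) ^ 2) * E) by (apply Rmult_le_pos; [apply pow2_ge_0 || nra | lra]). lra. }
  assert (h3 : 2 * D * A * Mm <= (D ^ 2 + A ^ 2) * (Vn + k * E)).
  { assert (0 <= ((D - A) ^ 2) * Mm) by (apply Rmult_le_pos; [apply pow2_ge_0 || nra | lra]).
    assert (0 <= (D ^ 2 + A ^ 2) * (Vn + k * E - Mm)) by (apply Rmult_le_pos; [apply pow2_ge_0 || nra | lra]). lra. }
  assert (W0 : 0 <= W) by (rewrite HW; nra).
  assert (g1 : 0 <= (5 * k - 2 * k - 3) * Vn * W).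
  { apply Rmult_le_pos; [apply Rmult_le_pos|]; lra. }
  assert (g2 : 0 <= (8 * k ^ 2 - k ^ 2 - 3 * k - 3) * E * W).
  { apply Rmult_le_pos; [apply Rmult_le_pos|]; nra. }
  assert (g3 : (A ^ 2 + B ^ 2) * (Vn + k * E) <= 2 * W * (Vn + k * E)).
  { apply Rmult_le_compat_r. nra. rewrite HW. nra. }
  assert (g4 : (D ^ 2 + A ^ 2) * (Vn + k * E) <= W * (Vn + k * E)).
  { apply Rmult_le_compat_r. nra. rewrite HW. nra. }
  assert (g5 : E * (D ^ 2 + B ^ 2) / 2 <= E * W).
  { rewrite HW. nra. }
  assert (g6 : B ^ 2 * E + A ^ 2 * E <= 2 * E * W).
  { rewrite HW. nra. }
  fold M in HP. lra.
Qed.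

Lemma zeta_bound r Y k : 0 < r -> 1 <= k -> Y ^ 2 / r <= k ^ 2 -> Rabs (Y / sqrt r) <= k.
Proof.
  intros Hr Hk HY. set (s := sqrt r).
  assert (Hs : s * s = r) by (apply sqrt_sqrt; lra).
  assert (Hs0 : 0 < s) by (apply sqrt_lt_R0; lra).
  assert (E : (Y / s) ^ 2 = Y ^ 2 / r) by (rewrite <- Hs; field; lra).
  rewrite <- pow2_abs in E. assert (0 <= Rabs (Y / s)) by apply Rabs_pos. nra.
Qed.

Lemma pointwise r Y p1 q1 p2 q2 d delta V k : 0 < r -> 1 <= k -> Rabs p2 <= V ->
  Y ^ 2 / r <= k ^ 2 -> Rabs delta <= 2 * k * V / sqrt r + k ^ 2 * Rabs q2 / r ->
  Rabs (Rg Y r p1 q1 p2 q2 + 2 * d * Pg Y r p1 q1 p2 q2 + delta * (Pg Y r p1 q1 p1 q1 + d ^ 2))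
  <= (5 * k * V / sqrt r + 8 * k ^ 2 * Rabs q2 / r) * (Pg Y r p1 q1 p1 q1 + d ^ 2).
Proof.
  intros Hr Hk Hp HY Hd.
  pose proof (zeta_bound r Y k Hr Hk HY) as Hz.
  set (s := sqrt r) in *.
  assert (Hs : s * s = r) by (apply sqrt_sqrt; lra).
  assert (Hs0 : 0 < s) by (apply sqrt_lt_R0; lra).
  set (a1 := (p1 - Y / r * q1) / s). set (b1 := q1 / r). set (zeta := Y / s) in *.
  set (nu := q2 / r). set (mu := p2 / s). set (Vn := V / s).
  assert (EQ : Pg Y r p1 q1 p1 q1 = b1 ^ 2 / 2 + a1 ^ 2).
  { unfold Pg, a1, b1. rewrite <- Hs. field. lra. }
  assert (EP : Pg Y r p1 q1 p2 q2 = b1 * nu / 2 + a1 * (mu - zeta * nu)).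
  { unfold Pg, a1, b1, nu, mu, zeta. rewrite <- Hs. field. lra. }
  assert (ER : Rg Y r p1 q1 p2 q2 = - b1 ^ 2 * nu - 2 * a1 * b1 * (mu - zeta * nu) - a1 ^ 2 * nu).
  { unfold Rg, a1, b1, nu, mu, zeta. rewrite <- Hs. field. lra. }
  assert (Enu : Rabs nu = Rabs q2 / r).
  { unfold nu, Rdiv. rewrite Rabs_mult, Rabs_inv, (Rabs_pos_eq r); lra. }
  assert (Hmu : Rabs mu <= Vn).
  { unfold mu, Vn, Rdiv. rewrite Rabs_mult, Rabs_inv, (Rabs_pos_eq s) by lra.
    apply Rmult_le_compat_r. left; apply Rinv_0_lt_compat; lra. exact Hp. }
  rewrite EQ, EP, ER.
  replace (5 * k * V / s + 8 * k ^ 2 * Rabs q2 / r) with (5 * k * Vn + 8 * k ^ 2 * Rabs nu)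
    by (rewrite Enu; unfold Vn; field; lra).
  apply core; auto.
  rewrite Enu. replace (2 * k * Vn) with (2 * k * V / s) by (unfold Vn; field; lra). unfold Rdiv in *; rewrite <- Rmult_assoc; exact Hd.
Qed.

Lemma Xb_dev r Y p2 q2 V k : 0 < r -> 1 <= k -> Rabs p2 <= V -> Y ^ 2 / r <= k ^ 2 ->
  Rabs (Hx Y r p2 q2 - (- q2 / (2 * r))) <= k * V / sqrt r + k ^ 2 * Rabs q2 / (2 * r).
Proof.
  intros Hr Hk Hp HY.
  pose proof (zeta_bound r Y k Hr Hk HY) as Hz.
  set (s := sqrt r) in *.
  assert (Hs : s * s = r) by (apply sqrt_sqrt; lra).
  assert (Hs0 : 0 < s) by (apply sqrt_lt_R0; lra).
  assert (E : Hx Y r p2 q2 - (- q2 / (2 * r)) = (Y / s) * (p2 / s) - (Y / s) ^ 2 * (q2 / r) / 2).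
  { unfold Hx. rewrite <- Hs. field. lra. }
  set (zeta := Y / s) in *. set (mu := p2 / s) in *. set (nu := q2 / r) in *.
  assert (Enu : Rabs nu = Rabs q2 / r).
  { unfold nu, Rdiv. rewrite Rabs_mult, Rabs_inv, (Rabs_pos_eq r); lra. }
  assert (Hmu : Rabs mu <= V / s).
  { unfold mu, Rdiv. rewrite Rabs_mult, Rabs_inv, (Rabs_pos_eq s) by lra.
    apply Rmult_le_compat_r. left; apply Rinv_0_lt_compat; lra. exact Hp. }
  assert (0 <= Rabs zeta) by apply Rabs_pos. assert (0 <= Rabs mu) by apply Rabs_pos.
  assert (0 <= Rabs nu) by apply Rabs_pos.
  rewrite E. eapply Rle_trans. apply Rabs_triang. rewrite Rabs_Ropp.
  rewrite Rabs_mult. unfold Rdiv at 1. rewrite Rabs_mult, Rabs_mult, <- RPow_abs, Rabs_inv, (Rabs_pos_eq 2) by lra.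
  assert (h1 : Rabs zeta * Rabs mu <= k * (V / s)) by (apply Rmult_le_compat; auto).
  assert (h2 : Rabs zeta ^ 2 * Rabs nu <= k ^ 2 * Rabs nu).
  { apply Rmult_le_compat_r; auto. apply pow_incr; auto. }
  rewrite Enu in h2.
  replace (k * V / s) with (k * (V / s)) by (unfold Rdiv; ring).
  replace (k ^ 2 * Rabs q2 / (2 * r)) with (k ^ 2 * (Rabs q2 / r) * / 2) by (field; lra).
  rewrite Enu. lra.
Qed.


Section Plane.
Variables (N : nat) (y : nat -> R) (r : R) (ux : nat -> R) (ut : R) (vx : nat -> R) (vt : R).

Definition TT a b := r + a * ut + b * vt.
Definition YY i a b := y i + a * ux i + b * vx i.
Definition EE i a b := phiNH (YY i a b) (TT a b).
Definition Xa i a b := Hx (YY i a b) (TT a b) (ux i) ut.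
Definition Xb i a b := Hx (YY i a b) (TT a b) (vx i) vt.
Definition Qa i a b := Pg (YY i a b) (TT a b) (ux i) ut (ux i) ut.
Definition Pab i a b := Pg (YY i a b) (TT a b) (ux i) ut (vx i) vt.
Definition Ra i a b := Rg (YY i a b) (TT a b) (ux i) ut (vx i) vt.
Definition SS a b := sm (seq 0 N) (fun i => EE i a b).
Definition S1 a b := sm (seq 0 N) (fun i => EE i a b * Xa i a b).
Definition S2 a b := sm (seq 0 N) (fun i => EE i a b * (Qa i a b + Xa i a b ^ 2)).
Definition HH a b := S2 a b / SS a b - (S1 a b / SS a b) ^ 2.

Lemma phi_pos Y T : 0 < T -> 0 < phiNH Y T.
Proof.
  intros. unfold phiNH. apply Rmult_lt_0_compat.
  apply Rinv_0_lt_compat, sqrt_lt_R0; lra. apply exp_pos.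
Qed.

Lemma sm_pos0 l f : (forall i, 0 < f i) -> 0 <= sm l f.
Proof.
  intros H. induction l; unfold sm in *; simpl. lra. specialize (H a). lra.
Qed.

Lemma SS_pos a b : (1 <= N)%nat -> 0 < TT a b -> 0 < SS a b.
Proof.
  intros HN HT. unfold SS. destruct N as [|n]. lia.
  simpl. unfold sm; simpl. fold (sm (seq 1 n) (fun i => EE i a b)).
  assert (0 < EE 0 a b) by (apply phi_pos; auto).
  assert (0 <= sm (seq 1 n) (fun i => EE i a b)) by (apply sm_pos0; intros; apply phi_pos; auto).
  lra.
Qed.

Lemma dEE_a i a b : 0 < TT a b ->
  is_derive (fun a => EE i a b) a (EE i a b * Xa i a b).
Proof.
  intros HT. unfold EE, Xa.
  assert (E1 : YY i a b = y i + b * vx i + a * ux i) by (unfold YY; ring).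
  assert (E2 : TT a b = r + b * vt + a * ut) by (unfold TT; ring).
  rewrite E1, E2.
  apply is_derive_ext with (f := fun a => phiNH (y i + b * vx i + a * ux i) (r + b * vt + a * ut)).
  { intro s. unfold YY, TT. f_equal; ring. }
  apply d_phi. lra.
Qed.

Lemma dXa_a i a b : 0 < TT a b ->
  is_derive (fun a => Xa i a b) a (Qa i a b).
Proof.
  intros HT. unfold Xa, Qa.
  assert (E1 : YY i a b = y i + b * vx i + a * ux i) by (unfold YY; ring).
  assert (E2 : TT a b = r + b * vt + a * ut) by (unfold TT; ring).
  rewrite E1, E2.
  apply is_derive_ext with (f := fun a => Hx (y i + b * vx i + a * ux i) (r + b * vt + a * ut) (ux i) ut).
  { intro s. unfold YY, TT. f_equal; ring. }
  apply d_Hx. lra.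
Qed.

Lemma dEE_b i b : 0 < TT 0 b ->
  is_derive (fun b => EE i 0 b) b (EE i 0 b * Xb i 0 b).
Proof.
  intros HT. unfold EE, Xb, YY, TT in *. apply d_phi. lra.
Qed.

Lemma dXa_b i b : 0 < TT 0 b ->
  is_derive (fun b => Xa i 0 b) b (Pab i 0 b).
Proof.
  intros HT. unfold Xa, Pab, YY, TT in *. apply d_Hx. lra.
Qed.

Lemma dQa_b i b : 0 < TT 0 b ->
  is_derive (fun b => Qa i 0 b) b (Ra i 0 b).
Proof.
  intros HT. unfold Qa, Ra, YY, TT in *. apply d_Pg. lra.
Qed.

Lemma dSS_a a b : 0 < TT a b -> is_derive (fun a => SS a b) a (S1 a b).
Proof.
  intros HT. unfold SS, S1. apply (d_sm _ (fun i a => EE i a b)). intro i. apply dEE_a; auto.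
Qed.

Lemma dS1_a a b : 0 < TT a b -> is_derive (fun a => S1 a b) a (S2 a b).
Proof.
  intros HT. unfold S1, S2. apply (d_sm _ (fun i a => EE i a b * Xa i a b)). intro i.
  eapply d_eq. apply d_mult. apply dEE_a; auto. apply dXa_a; auto. cbv beta. ring.
Qed.

Lemma dF_a a b : (1 <= N)%nat -> 0 < TT a b ->
  is_derive (fun a => ln (SS a b)) a (S1 a b / SS a b).
Proof.
  intros HN HT. apply (d_ln (fun a => SS a b)). apply dSS_a; auto. apply SS_pos; auto.
Qed.

Lemma dH_a a b : (1 <= N)%nat -> 0 < TT a b ->
  is_derive (fun a => S1 a b / SS a b) a (HH a b).
Proof.
  intros HN HT. pose proof (SS_pos a b HN HT).
  eapply d_eq. apply is_derive_div. apply dS1_a; auto. apply dSS_a; auto. lra.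
  unfold HH. field. lra.
Qed.

Lemma loc_aff c q a0 : 0 < c + a0 * q -> locally a0 (fun a => 0 < c + a * q).
Proof.
  intros H.
  assert (Hp : 0 < (c + a0 * q) / (Rabs q + 1)).
  { apply Rdiv_lt_0_compat; auto. pose proof (Rabs_pos q); lra. }
  exists (mkposreal _ Hp). intros a Hb. simpl in Hb.
  unfold ball in Hb; simpl in Hb; unfold AbsRing_ball, abs, minus, plus, opp in Hb; simpl in Hb.
  assert (Hq : 0 <= Rabs q) by apply Rabs_pos.
  assert (Hx : Rabs ((a - a0) * q) <= Rabs (a + - a0) * Rabs q).
  { rewrite Rabs_mult. apply Req_le. reflexivity. }
  assert (Hy : Rabs (a + - a0) * Rabs q <= (c + a0 * q) / (Rabs q + 1) * Rabs q).
  { apply Rmult_le_compat_r; lra. }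
  assert (Hz : (c + a0 * q) / (Rabs q + 1) * Rabs q < c + a0 * q).
  { apply (Rmult_lt_reg_r (Rabs q + 1)). lra.
    replace ((c + a0 * q) / (Rabs q + 1) * Rabs q * (Rabs q + 1)) with ((c + a0 * q) * Rabs q) by (field; lra).
    nra. }
  pose proof (Rle_abs (- ((a - a0) * q))). rewrite Rabs_Ropp in H0.
  replace (c + a * q) with (c + a0 * q + (a - a0) * q) by ring. lra.
Qed.

Lemma hess_eq b : (1 <= N)%nat -> 0 < TT 0 b ->
  Derive (fun a => Derive (fun a' => ln (SS a' b)) a) 0 = HH 0 b.
Proof.
  intros HN HT.
  rewrite (Derive_ext_loc _ (fun a => S1 a b / SS a b)).
  - apply is_derive_unique. apply dH_a; auto.
  - assert (L : locally 0 (fun a => 0 < TT a b)).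
    { assert (HT' : 0 < (r + b * vt) + 0 * ut) by (unfold TT in HT; lra).
      destruct (loc_aff _ _ _ HT') as [e He]. exists e. intros a Ha.
      specialize (He a Ha). unfold TT; lra. }
    destruct L as [e He]. exists e. intros a Ha. apply is_derive_unique. apply dF_a; auto.
Qed.

Definition Sb b := sm (seq 0 N) (fun i => EE i 0 b * Xb i 0 b).
Definition S1b b := sm (seq 0 N) (fun i => EE i 0 b * Xb i 0 b * Xa i 0 b + EE i 0 b * Pab i 0 b).
Definition S2b b := sm (seq 0 N) (fun i => EE i 0 b * Xb i 0 b * (Qa i 0 b + Xa i 0 b ^ 2)
   + EE i 0 b * (Ra i 0 b + 2 * Xa i 0 b * Pab i 0 b)).
Definition DH b := (S2b b * SS 0 b - S2 0 b * Sb b) / SS 0 b ^ 2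
   - 2 * (S1 0 b / SS 0 b) * ((S1b b * SS 0 b - S1 0 b * Sb b) / SS 0 b ^ 2).

Lemma dSS_b b : 0 < TT 0 b -> is_derive (fun b => SS 0 b) b (Sb b).
Proof.
  intros HT. unfold SS, Sb. apply (d_sm _ (fun i b => EE i 0 b)). intro i. apply dEE_b; auto.
Qed.

Lemma dS1_b b : 0 < TT 0 b -> is_derive (fun b => S1 0 b) b (S1b b).
Proof.
  intros HT. unfold S1, S1b. apply (d_sm _ (fun i b => EE i 0 b * Xa i 0 b)). intro i.
  eapply d_eq. apply d_mult. apply dEE_b; auto. apply dXa_b; auto. cbv beta. ring.
Qed.

Lemma dS2_b b : 0 < TT 0 b -> is_derive (fun b => S2 0 b) b (S2b b).
Proof.
  intros HT. unfold S2, S2b. apply (d_sm _ (fun i b => EE i 0 b * (Qa i 0 b + Xa i 0 b ^ 2))). intro i.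
  eapply d_eq. apply d_mult. apply dEE_b; auto. apply d_plus. apply dQa_b; auto.
  apply (d_sq (fun b => Xa i 0 b)). apply dXa_b; auto. cbv beta. ring.
Qed.

Lemma dHH_b b : (1 <= N)%nat -> 0 < TT 0 b -> is_derive (fun b => HH 0 b) b (DH b).
Proof.
  intros HN HT. pose proof (SS_pos 0 b HN HT).
  unfold HH. eapply d_eq. apply d_minus.
  apply is_derive_div. apply dS2_b; auto. apply dSS_b; auto. lra.
  apply (d_sq (fun b => S1 0 b / SS 0 b)).
  apply is_derive_div. apply dS1_b; auto. apply dSS_b; auto. lra.
  unfold DH. cbv beta. field. lra.
Qed.

Lemma third_eq : (1 <= N)%nat -> 0 < TT 0 0 ->
  Derive (fun b => Derive (fun a => Derive (fun a' => ln (SS a' b)) a) 0) 0 = DH 0.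
Proof.
  intros HN HT.
  assert (L : locally 0 (fun b => 0 < TT 0 b)).
  { assert (HT' : 0 < (r + 0 * ut) + 0 * vt) by (unfold TT in HT; lra).
    destruct (loc_aff _ _ _ HT') as [e He]. exists e. intros a Ha.
    specialize (He a Ha). unfold TT; lra. }
  rewrite (Derive_ext_loc _ (fun b => HH 0 b)).
  - apply is_derive_unique. apply dHH_b; auto.
  - destruct L as [e He]. exists e. intros b Hb. apply hess_eq; auto.
Qed.

End Plane.


Lemma sm_ext l f g : (forall i, f i = g i) -> sm l f = sm l g.
Proof. intros H. induction l; unfold sm in *; simpl; auto. rewrite H, IHl; auto. Qed.
Lemma sm_le l f g : (forall i, In i l -> f i <= g i) -> sm l f <= sm l g.
Proof.
  intros H. induction l; unfold sm in *; simpl. lra.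
  apply Rplus_le_compat. apply H; simpl; auto. apply IHl; intros; apply H; simpl; auto.
Qed.
Lemma sm_nonneg l f : (forall i, In i l -> 0 <= f i) -> 0 <= sm l f.
Proof.
  intros H. induction l; unfold sm in *; simpl. lra.
  assert (0 <= f a) by (apply H; simpl; auto).
  assert (0 <= fold_right Rplus 0 (map f l)) by (apply IHl; intros; apply H; simpl; auto). lra.
Qed.
Lemma sm_abs_le l f g : (forall i, In i l -> Rabs (f i) <= g i) -> Rabs (sm l f) <= sm l g.
Proof.
  intros H. induction l; unfold sm in *; simpl. rewrite Rabs_R0; lra.
  eapply Rle_trans. apply Rabs_triang.
  apply Rplus_le_compat. apply H; simpl; auto. apply IHl; intros; apply H; simpl; auto.
Qed.
Lemma sm_scal l c f : sm l (fun i => c * f i) = c * sm l f.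
Proof. induction l; unfold sm in *; cbn [fold_right map]. ring. rewrite IHl. ring. Qed.
Lemma sm_shift l e X c : sm l (fun i => e i * (X i - c)) = sm l (fun i => e i * X i) - c * sm l e.
Proof. induction l; unfold sm in *; cbn [fold_right map]. ring. rewrite IHl. ring. Qed.
Lemma id1 l (e X Q : nat -> R) m :
  sm l (fun i => e i * (Q i + (X i - m) ^ 2)) =
  sm l (fun i => e i * (Q i + X i ^ 2)) - 2 * m * sm l (fun i => e i * X i) + m ^ 2 * sm l e.
Proof. induction l; unfold sm in *; cbn [fold_right map]. ring. rewrite IHl. ring. Qed.
Lemma id2 l (e X Y Q P R0 : nat -> R) m n :
  sm l (fun i => e i * (R0 i + 2 * (X i - m) * P i + (Y i - n) * (Q i + (X i - m) ^ 2))) =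
  sm l (fun i => e i * Y i * (Q i + X i ^ 2) + e i * (R0 i + 2 * X i * P i))
  - n * sm l (fun i => e i * (Q i + X i ^ 2))
  - 2 * m * sm l (fun i => e i * Y i * X i + e i * P i)
  + m ^ 2 * sm l (fun i => e i * Y i) + 2 * m * n * sm l (fun i => e i * X i)
  - m ^ 2 * n * sm l e.
Proof. induction l; unfold sm in *; cbn [fold_right map]. ring. rewrite IHl. ring. Qed.

Lemma Pg_nonneg Y T p q : 0 < T -> 0 <= Pg Y T p q p q.
Proof.
  intros HT. unfold Pg.
  assert (0 <= q * q / (2 * T ^ 2)).
  { apply Rdiv_le_0_compat. apply Rle_0_sqr. apply Rmult_lt_0_compat. lra. apply pow_lt; lra. }
  assert (0 <= (p - Y / T * q) * (p - Y / T * q) / T).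
  { apply Rdiv_le_0_compat. apply Rle_0_sqr. lra. }
  lra.
Qed.

Lemma final N y r ux ut vx vt V k : (1 <= N)%nat -> 0 < TT r ut vt 0 0 -> 1 <= k ->
  (forall i, In i (seq 0 N) -> Rabs (vx i) <= V) ->
  (forall i, In i (seq 0 N) -> (YY y ux vx i 0 0) ^ 2 / TT r ut vt 0 0 <= k ^ 2) ->
  0 <= HH N y r ux ut vx vt 0 0 /\
  Rabs (DH N y r ux ut vx vt 0) <=
    (5 * k * V / sqrt (TT r ut vt 0 0) + 8 * k ^ 2 * Rabs vt / TT r ut vt 0 0)
    * HH N y r ux ut vx vt 0 0.
Proof.
  intros HN HT Hk HV HY.
  set (T := TT r ut vt 0 0) in *.
  set (l := seq 0 N) in *.
  set (e := fun i => EE y r ux ut vx vt i 0 0).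
  set (X := fun i => Xa y r ux ut vx vt i 0 0).
  set (Y := fun i => Xb y r ux ut vx vt i 0 0).
  set (Q := fun i => Qa y r ux ut vx vt i 0 0).
  set (P := fun i => Pab y r ux ut vx vt i 0 0).
  set (R0 := fun i => Ra y r ux ut vx vt i 0 0).
  pose proof (SS_pos N y r ux ut vx vt 0 0 HN HT) as HS.
  set (S := SS N y r ux ut vx vt 0 0) in *.
  set (m := S1 N y r ux ut vx vt 0 0 / S).
  set (n := Sb N y r ux ut vx vt 0 / S).
  set (L := 5 * k * V / sqrt T + 8 * k ^ 2 * Rabs vt / T).
  assert (He : forall i, 0 < e i) by (intro; apply phi_pos; auto).
  assert (I1 : HH N y r ux ut vx vt 0 0 * S = sm l (fun i => e i * (Q i + (X i - m) ^ 2))).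
  { rewrite id1. unfold HH, m, S, S2, S1, SS, e, X, Q, l in *. cbv beta.
    field. lra. }
  assert (I2 : DH N y r ux ut vx vt 0 * S =
     sm l (fun i => e i * (R0 i + 2 * (X i - m) * P i + (Y i - n) * (Q i + (X i - m) ^ 2)))).
  { rewrite id2. unfold DH, m, n, S, S2, S1, S2b, S1b, Sb, SS, e, X, Y, Q, P, R0, l in *. cbv beta.
    field. lra. }
  set (c0 := - vt / (2 * T)).
  set (B0 := k * V / sqrt T + k ^ 2 * Rabs vt / (2 * T)).
  assert (HB : forall i, In i l -> Rabs (Y i - c0) <= B0).
  { intros i Hi. unfold Y, Xb, c0, B0. fold T. apply Xb_dev; auto. }
  assert (Hn : Rabs (n - c0) <= B0).
  { assert (E1 : n - c0 = sm l (fun i => e i * (Y i - c0)) / S).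
    { rewrite sm_shift. unfold n, S, Sb, SS, e, Y, l in *. cbv beta. field. lra. }
    rewrite E1. unfold Rdiv. rewrite Rabs_mult, Rabs_inv, (Rabs_pos_eq S) by lra.
    apply (Rmult_le_reg_r S). lra. rewrite Rmult_assoc, Rinv_l by lra. rewrite Rmult_1_r.
    eapply Rle_trans. apply sm_abs_le with (g := fun i => B0 * e i).
    { intros i Hi. rewrite Rabs_mult, (Rabs_pos_eq (e i)) by (left; auto).
      rewrite Rmult_comm. apply Rmult_le_compat_r. left; auto. auto. }
    rewrite sm_scal. apply Req_le. reflexivity. }
  assert (HG : forall i, 0 <= Q i + (X i - m) ^ 2).
  { intro i. assert (0 <= Q i) by (unfold Q, Qa; apply Pg_nonneg; auto).
    assert (0 <= (X i - m) ^ 2) by apply pow2_ge_0. lra. }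
  assert (Hpt : forall i, In i l ->
     Rabs (R0 i + 2 * (X i - m) * P i + (Y i - n) * (Q i + (X i - m) ^ 2))
     <= L * (Q i + (X i - m) ^ 2)).
  { intros i Hi. unfold R0, P, Q, Ra, Pab, Qa. fold T. unfold L. apply pointwise; auto.
    assert (Rabs (Y i - n) <= Rabs (Y i - c0) + Rabs (n - c0)).
    { replace (Y i - n) with ((Y i - c0) + - (n - c0)) by ring.
      eapply Rle_trans. apply Rabs_triang. rewrite Rabs_Ropp. lra. }
    specialize (HB i Hi). assert (0 < sqrt T) by (apply sqrt_lt_R0; lra).
    replace (2 * k * V / sqrt T + k ^ 2 * Rabs vt / T) with (2 * B0) by (unfold B0; field; lra).
    lra. }
  assert (HHS : 0 <= HH N y r ux ut vx vt 0 0 * S).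
  { rewrite I1. apply sm_nonneg. intros; apply Rmult_le_pos; [left; auto | auto]. }
  split.
  - apply (Rmult_le_reg_r S). lra. lra.
  - apply (Rmult_le_reg_r S). lra.
    rewrite <- (Rabs_pos_eq S) at 1 by lra. rewrite <- Rabs_mult, I2, Rmult_assoc, I1.
    rewrite <- sm_scal. apply sm_abs_le. intros i Hi.
    rewrite Rabs_mult, (Rabs_pos_eq (e i)) by (left; auto).
    replace (L * (e i * (Q i + (X i - m) ^ 2))) with (e i * (L * (Q i + (X i - m) ^ 2))) by ring.
    apply Rmult_le_compat_l. left; auto. apply Hpt; auto.
Qed.


Lemma maxN_ge (l : list nat) (g : nat -> R) i : In i l -> g i <= fold_right Rmax 0 (map g l).
Proof.
  induction l; simpl; intros H. contradiction.
  destruct H as [<-|H]. apply Rmax_l. eapply Rle_trans. apply IHl; auto. apply Rmax_r.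
Qed.
Lemma maxN_nonneg (l : list nat) (g : nat -> R) : 0 <= fold_right Rmax 0 (map g l).
Proof. induction l; simpl. lra. eapply Rle_trans. apply IHl. apply Rmax_r. Qed.
Lemma maxN_mono (l : list nat) (g h : nat -> R) : (forall i, In i l -> g i <= h i) ->
  fold_right Rmax 0 (map g l) <= fold_right Rmax 0 (map h l).
Proof.
  induction l; simpl; intros H. lra.
  apply Rmax_le_compat. apply H; auto. apply IHl; intros; apply H; auto.
Qed.

Lemma lub_ge (E : R -> Prop) e M : E e -> (forall z, E z -> z <= M) -> e <= real (Lub_Rbar E).
Proof.
  intros He HM. destruct (Lub_Rbar_correct E) as [Hub Hl].
  specialize (Hub e He). specialize (Hl (Finite M) (fun z Hz => HM z Hz)).
  destruct (Lub_Rbar E); simpl in *; auto; contradiction.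
Qed.

Lemma glb_bounds (E : R -> Prop) e M : E e -> (forall z, E z -> M <= z) ->
  M <= real (Glb_Rbar E) <= e.
Proof.
  intros He HM. destruct (Glb_Rbar_correct E) as [Hlb Hl].
  specialize (Hlb e He). specialize (Hl (Finite M) (fun z Hz => HM z Hz)).
  destruct (Glb_Rbar E); simpl in *; auto; contradiction.
Qed.

Lemma div_mono a b c d : 0 <= a -> a <= b -> 0 < c -> c <= d -> a / d <= b / c.
Proof.
  intros. unfold Rdiv. apply Rmult_le_compat; auto.
  left; apply Rinv_0_lt_compat; lra. apply Rinv_le_contravar; auto.
Qed.

Lemma HH_indep N y r ux ut vx vt vx' vt' :
  HH N y r ux ut vx vt 0 0 = HH N y r ux ut vx' vt' 0 0.
Proof.
  assert (B : forall i, EE y r ux ut vx vt i 0 0 = EE y r ux ut vx' vt' i 0 0 /\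
                        Xa y r ux ut vx vt i 0 0 = Xa y r ux ut vx' vt' i 0 0 /\
                        Qa y r ux ut vx vt i 0 0 = Qa y r ux ut vx' vt' i 0 0).
  { intro i. unfold EE, Xa, Qa, YY, TT. rewrite !Rmult_0_l, !Rplus_0_r. auto. }
  assert (A1 : SS N y r ux ut vx vt 0 0 = SS N y r ux ut vx' vt' 0 0).
  { apply sm_ext. intro i. apply B. }
  assert (A2 : S1 N y r ux ut vx vt 0 0 = S1 N y r ux ut vx' vt' 0 0).
  { apply sm_ext. intro i. destruct (B i) as [E1 [E2 E3]]. rewrite E1, E2. auto. }
  assert (A3 : S2 N y r ux ut vx vt 0 0 = S2 N y r ux ut vx' vt' 0 0).
  { apply sm_ext. intro i. destruct (B i) as [E1 [E2 E3]]. rewrite E1, E2, E3. auto. }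
  unfold HH. rewrite A1, A2, A3. auto.
Qed.

Theorem proposition6p10 (N : nat) (x dx : nat -> R) (t dt : R) :
  (1 <= N)%nat -> 0 < t -> 0 < t + dt ->
  gen_self_concordant N 1 (logPhi N)
    (fun y r => exists s, 0 <= s <= 1 /\
        (forall i, (i < N)%nat -> y i = seg_x x dx s i) /\ r = seg_t t dt s)
    (star_norm N x dx t dt).
Proof.
  intros HN Ht Htd x0 t0 [s [Hs [Hxs Ht0]]] ux ut vx vt.
  set (Tm := Rmin t (t + dt)).
  assert (HTm : 0 < Tm) by (unfold Tm, Rmin; destruct Rle_dec; lra).
  assert (Hseg : forall s', 0 <= s' <= 1 -> Tm <= seg_t t dt s').
  { intros s' Hs'. unfold seg_t, Tm, Rmin. destruct Rle_dec; nra. }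
  assert (Hr : 0 < t0) by (pose proof (Hseg s Hs); lra).
  assert (Hts : Tm <= t_star t dt <= t0).
  { unfold t_star. apply glb_bounds. exists s; auto.
    intros z [s' [Hs' ->]]. apply Hseg; auto. }
  set (Mb := Defs.maxN N (fun i => (Rabs (x i) + Rabs (dx i)) ^ 2 / Tm)).
  assert (HK : forall i, (i < N)%nat -> (x0 i) ^ 2 / t0 <= K_seg N x dx t dt).
  { intros i Hi. unfold K_seg.
    apply Rle_trans with (Defs.maxN N (fun i => seg_x x dx s i ^ 2 / seg_t t dt s));
      [|apply lub_ge with (M := Mb)].
    - rewrite (Hxs i Hi), Ht0. unfold Defs.maxN.
      apply (maxN_ge _ (fun i => seg_x x dx s i ^ 2 / seg_t t dt s)).
      apply in_seq. lia.
    - exists s. split; auto.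
    - intros z [s' [Hs' ->]]. unfold Mb, Defs.maxN. apply maxN_mono. intros j Hj.
      pose proof (Hseg s' Hs').
      apply div_mono; auto. apply pow2_ge_0.
      unfold seg_x. rewrite <- (pow2_abs (x j + s' * dx j)).
      assert (Rabs (x j + s' * dx j) <= Rabs (x j) + Rabs (dx j)).
      { eapply Rle_trans. apply Rabs_triang. rewrite Rabs_mult, (Rabs_pos_eq s') by lra.
        assert (0 <= Rabs (dx j)) by apply Rabs_pos. nra. }
      apply pow_incr. split; auto. apply Rabs_pos. }
  set (kap := Rmax (K_seg N x dx t dt) 1).
  set (k := sqrt kap).
  assert (Hk2 : k ^ 2 = kap) by (unfold k; rewrite <- Rsqr_pow2; apply Rsqr_sqrt; unfold kap; pose proof (Rmax_r (K_seg N x dx t dt) 1); lra).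
  assert (Hk : 1 <= k).
  { unfold k. rewrite <- sqrt_1. apply sqrt_le_1_alt. apply Rmax_r. }
  set (V := Defs.maxN N (fun i => Rabs (vx i))).
  assert (HV0 : 0 <= V) by apply maxN_nonneg.
  assert (Hhess : hess_form (logPhi N) x0 t0 ux ut = HH N x0 t0 ux ut vx vt 0 0).
  { rewrite (HH_indep N x0 t0 ux ut vx vt ux ut). unfold hess_form.
    apply (hess_eq N x0 t0 ux ut ux ut 0 HN). unfold TT; lra. }
  assert (Hthird : third_form (logPhi N) x0 t0 ux ut vx vt = DH N x0 t0 ux ut vx vt 0).
  { unfold third_form. apply (third_eq N x0 t0 ux ut vx vt HN). unfold TT; lra. }
  rewrite Hhess, Hthird.
  assert (HTT : TT t0 ut vt 0 0 = t0) by (unfold TT; ring).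
  destruct (final N x0 t0 ux ut vx vt V k HN) as [H0 Hb].
  { rewrite HTT; auto. }
  { auto. }
  { intros i Hi. unfold V, Defs.maxN. apply (maxN_ge _ (fun i => Rabs (vx i))). auto. }
  { intros i Hi. rewrite HTT. unfold YY.
    replace (x0 i + 0 * ux i + 0 * vx i) with (x0 i) by ring.
    apply in_seq in Hi. rewrite Hk2. eapply Rle_trans. apply HK. lia. apply Rmax_l. }
  rewrite HTT in Hb.
  eapply Rle_trans. exact Hb. rewrite Rmult_1_l. apply Rmult_le_compat_r; auto.
  unfold star_norm, A_x, A_t. fold kap. fold k. fold V. rewrite <- Hk2.
  set (ts := t_star t dt) in *.
  assert (Hsq : 0 < sqrt ts <= sqrt t0).
  { split. apply sqrt_lt_R0; lra. apply sqrt_le_1_alt; lra. }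
  assert (0 <= Rabs vt) by apply Rabs_pos.
  assert (h1 : 5 * k * V / sqrt t0 <= 8 * k / sqrt ts * V).
  { replace (8 * k / sqrt ts * V) with (8 * k * V / sqrt ts) by (field; lra).
    apply div_mono; try lra. apply Rmult_le_pos; [|auto]. lra.
    apply Rmult_le_compat_r; auto. lra. }
  assert (h2 : 8 * k ^ 2 * Rabs vt / t0 <= 16 * k ^ 2 / ts * Rabs vt).
  { replace (16 * k ^ 2 / ts * Rabs vt) with (16 * k ^ 2 * Rabs vt / ts) by (field; lra).
    apply div_mono; try lra. apply Rmult_le_pos; [|auto]. nra.
    apply Rmult_le_compat_r; auto. nra. }
  lra.
Qed.
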